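(* Assume the process is uniformly allowable with constant $\alpha>0$, and set $p_*=\alpha/2$. Let $\theta\in\mathcal I$, $k\in[N]$, $0<\tilde\delta<1$ and $\mathbf s\in[0,1]^N$. If there exists $i\in[N]$ with $\mathbf M_\theta(k,i)>0$ and $s_i<1-\tilde\delta$, then $f_\theta^{(k)}(\mathbf s)<1-p_*\tilde\delta$.
   Context: $N\ge2$, $\mathcal I$ a countable set, $[N]=\{0,\dots,N-1\}$. For each $\theta\in\mathcal I$ and $k\in[N]$, $f_\theta^{(k)}(\mathbf s)=\sum_{\mathbf z\in\mathbb N_0^N}f_\theta^{(k)}[\mathbf z]\mathbf s^{\mathbf z}$ ($\mathbf s^{\mathbf z}=\prod_j s_j^{z_j}$) is the pgf of a probability distribution on $\mathbb N_0^N$, and $\mathbf M_\theta(k,i)=\partial f_\theta^{(k)}/\partial s_i(\mathbf 1)$ (finite). Uniformly allowable with constant $\alpha$ means $\inf\{\sum_{\mathbf w\in\mathbb N_0^N:\,w_i\ne0}f_\theta^{(k)}[\mathbf w]:\theta\in\mathcal I,\ k,i\in[N],\ \mathbf M_\theta(k,i)>0\}>\alpha$. *)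

(* Defs.v *)
From HB Require Import structures.
From mathcomp Require Import all_boot all_order all_algebra.
From mathcomp Require Import all_classical all_reals all_analysis.
Set Implicit Arguments. Unset Strict Implicit. Unset Printing Implicit Defensive.
Import Order.TTheory GRing.Theory Num.Theory.
Import numFieldNormedType.Exports.
Local Open Scope classical_set_scope.
Local Open Scope ring_scope.

Definition is_prob (R : realType) (N : nat) (p : {ffun 'I_N -> nat} -> R) : Prop :=
  (forall z, 0 <= p z) /\
  (\esum_(z in [set: {ffun 'I_N -> nat}]) (p z)%:E = 1%E).

(* pgf  f(s) = sum_z p[z] s^z, with s^z = prod_j s_j^{z_j}  (extended-real valued;
   finite, in [0,1], for s in [0,1]^N) *)
Definition pgf (R : realType) (N : nat) (p : {ffun 'I_N -> nat} -> R)
  (s : 'I_N -> R) : \bar R :=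
  \esum_(z in [set: {ffun 'I_N -> nat}]) (p z * \prod_(j < N) s j ^+ z j)%:E.

(* m is the partial derivative  d f / d s_i  at the point 1 = (1,...,1).
   As f is only defined on [0,1]^N, this is the (one-sided, left) derivative
   along the i-th coordinate: lim_{h -> 0+} (f(1) - f(1 - h e_i)) / h = m. *)
Definition pgf_partial_at_one (R : realType) (N : nat)
  (p : {ffun 'I_N -> nat} -> R) (i : 'I_N) (m : R) : Prop :=
  (fun h : R => (fine (pgf p (fun _ => 1)) -
                 fine (pgf p (fun j => if j == i then 1 - h else 1))) / h)
    @ 0^'+ --> m.

(* inf { sum_{w : w_i <> 0} f_theta^(k)[w] : theta, k, i with M_theta(k,i) > 0 } > alpha
   (the infimum of the empty set being +oo). *)
Definition uniformly_allowable (R : realType) (N : nat) (I : Type)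
  (f : I -> 'I_N -> {ffun 'I_N -> nat} -> R) (M : I -> 'I_N -> 'I_N -> R)
  (alpha : R) : Prop :=
  exists beta : R, alpha < beta /\
    forall th k i, 0 < M th k i ->
      (beta%:E <= \esum_(w in [set w : {ffun 'I_N -> nat} | w i != 0%N]) (f th k w)%:E)%E.

(* Main.v *)
Require Import Defs.
From HB Require Import structures.
From mathcomp Require Import all_boot all_order all_algebra.
From mathcomp Require Import all_classical all_reals all_analysis.
From mathcomp Require Import lra.
Import Order.TTheory GRing.Theory Num.Theory.
Local Open Scope classical_set_scope.
Local Open Scope ring_scope.

Lemma my_esumZl (R : realType) (T : choiceType) (S : set T) (a : T -> \bar R) (c : R) :
  0 <= c -> (forall x, (0 <= a x)%E) ->
  (\esum_(i in S) (c%:E * a i) = c%:E * \esum_(i in S) a i)%E.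
Proof.
move=> c0 a0; rewrite /esum -ereal_supZl //; last first.
  by apply/set0P; exists 0%E; exists set0; [exact: fsets_set0|rewrite fsbig_set0].
congr ereal_sup; apply/seteqP; split => x /=.
- move=> [X HX <-]; exists (\sum_(i \in X) a i)%R; first by exists X.
  by rewrite ge0_mule_fsumr.
- move=> [y [X HX <-] <-]; exists X => //.
  by rewrite ge0_mule_fsumr.
Qed.

Lemma prod_le1 (R : realType) (N : nat) (s : 'I_N -> R) (z : 'I_N -> nat) (P : pred 'I_N) :
  (forall j, 0 <= s j <= 1) -> 0 <= \prod_(j < N | P j) s j ^+ z j <= 1.
Proof.
move=> hs; apply/andP; split.
  by apply: prodr_ge0 => j _; apply: exprn_ge0; case/andP: (hs j).
apply: prodr_ile1 => j _; case/andP: (hs j) => h0 h1.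
by rewrite exprn_ge0 //= exprn_ile1.
Qed.

Theorem lemma5p7 (R : realType) (N : nat) (I : countType)
  (f : I -> 'I_N -> {ffun 'I_N -> nat} -> R) (M : I -> 'I_N -> 'I_N -> R)
  (alpha : R) :
  (2 <= N)%N ->
  (forall th k, is_prob (f th k)) ->
  (forall th k i, pgf_partial_at_one (f th k) i (M th k i)) ->
  0 < alpha ->
  uniformly_allowable f M alpha ->
  forall (th : I) (k : 'I_N) (dt : R) (s : 'I_N -> R),
    0 < dt < 1 ->
    (forall j, 0 <= s j <= 1) ->
    (exists i, 0 < M th k i /\ s i < 1 - dt) ->
    (pgf (f th k) s < (1 - alpha / 2 * dt)%:E)%E.
Proof.
move=> _ hprob _ alpha0 [beta [hab hua]] th k dt s /andP[dt0 dt1] hs [i [Mi si]].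
have [p0 p1] := hprob th k.
set p := f th k in p0 p1 *.
have hb := hua th k i Mi.
set A := [set w : {ffun 'I_N -> nat} | w i != 0%N] in hb.
have q0 : forall z, (0 <= (p z * \prod_(j < N) s j ^+ z j)%:E)%E.
  move=> z; rewrite lee_fin mulr_ge0 //.
  by case/andP: (@prod_le1 _ _ s z xpredT hs).
rewrite /pgf (esumID A) //.
have e1 := esumID A [set: {ffun 'I_N -> nat}] (fun z => (p z)%:E)
  (fun z _ => (p0 z : (0 <= (p z)%:E)%E)).
rewrite p1 !setTI in e1; rewrite !setTI.
have hA : (\esum_(z in A) (p z * \prod_(j < N) s j ^+ z j)%:E <=
           (1 - dt)%:E * \esum_(z in A) (p z)%:E)%E.
  rewrite -my_esumZl; last by move=> z; rewrite lee_fin.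
    apply: le_esum => z /= zi; rewrite -EFinM lee_fin mulrC ler_wpM2r //.
    rewrite (bigD1 i) //=.
    have [h0 h1] := andP (@prod_le1 _ _ s z (fun j => j != i) hs).
    case/andP: (hs i) => si0 si1.
    apply: (@le_trans _ _ (s i ^+ z i)).
      by rewrite -[leRHS]mulr1 ler_wpM2l // exprn_ge0.
    have : (z i != 0)%N := zi; case: (z i) => // n _; rewrite exprS.
    apply: (le_trans _ (ltW si)); rewrite -[leRHS]mulr1 ler_wpM2l //.
    by rewrite exprn_ile1.
  by rewrite subr_ge0 ltW.
have hAc : (\esum_(z in ~` A) (p z * \prod_(j < N) s j ^+ z j)%:E <=
           \esum_(z in ~` A) (p z)%:E)%E.
  apply: le_esum => z _; rewrite lee_fin -[leRHS]mulr1 ler_wpM2l //.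
  by case/andP: (@prod_le1 _ _ s z xpredT hs).
have ga : (0 <= \esum_(z in A) (p z)%:E)%E by apply: esum_ge0 => z _; rewrite lee_fin.
have gb : (0 <= \esum_(z in ~` A) (p z)%:E)%E by apply: esum_ge0 => z _; rewrite lee_fin.
move: hA hAc ga gb e1 hb.
case: (\esum_(z in A) (p z)%:E)%E => [ra| |]; case: (\esum_(z in ~` A) (p z)%:E)%E => [rb| |] //=.
move=> hA hAc ga gb e1 hb.
apply: (le_lt_trans (leeD hA hAc)).
rewrite -EFinM -EFinD lte_fin.
rewrite lee_fin in ga gb hb.
move: e1 => /eqP; rewrite -EFinD eqe => /eqP e1.
have : dt * beta <= dt * ra by rewrite ler_wpM2l // ltW.
have : dt * (alpha / 2) < dt * beta.
  rewrite ltr_pM2l //; apply: (lt_trans _ hab); rewrite ltr_pdivrMr //.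
  by rewrite ltr_pMr // ltr1n.
move=> h1 h2; clear -h1 h2 e1 dt0.
have -> : rb = 1 - ra by rewrite e1 addrC addKr.
rewrite mulrBl mul1r addrC addrA subrK ltrD2l ltrN2 mulrC.
exact: lt_le_trans h1 h2.
Qed.
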